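(* Let $n\ge2$, $F(a)=\prod_{i=1}^n(a-a_i)$ with distinct real $a_i$, and consider, for $0<a<a_1$, the superintegrable systems (integrals of degree $2n+1$) of the construction below with $\nu_n=1$: $\mathcal{I}_{-+}$: $x(a)=\frac a2-\frac1{\sqrt{a_1-a}}-\sum_{i=2}^n\frac{\xi_i}{\sqrt{a_i-a}}$, so that with $u=\sqrt a\in(0,\sqrt{a_1})$, $g=(\mu^2du^2+dy^2)/u^2$, $\mu=1-\frac1{(a_1-u^2)^{3/2}}-\sum_{i=2}^n\frac{\xi_i}{(a_i-u^2)^{3/2}}$; $\mathcal{I}_{--}$: $x(a)=\frac a2+\frac1{\sqrt{a_1-a}}+\sum_{i=2}^n\frac{\xi_i}{\sqrt{a_i-a}}$, so that $\mu=1+\frac1{(a_1-u^2)^{3/2}}+\sum_{i=2}^n\frac{\xi_i}{(a_i-u^2)^{3/2}}$. These systems (generalizing the cubic cases $\mathcal{I}_{-\pm}$ with $F=a-a_1$) are globally defined on $M\cong\mathbb{H}^2$ under the restrictions $\mathcal{I}_{-+}$: $0<a_1<1$, $a_i>1$ ($i\ge2$), $\xi_i>0$, and $\frac1{|a_1|^{3/2}}+\sum_{i=2}^n\frac{\xi_i}{|a_i|^{3/2}}>1$; $\mathcal{I}_{--}$: $0<a_1<1$, $a_i>1$ ($i\ge2$), $\xi_i>0$.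
   Context: Construction (odd degree $2n+1$): $F=\sum_kA_ka^k=\prod_i(a-a_i)$, signs $\epsilon_i$ (here all $\epsilon_i=-1$), $\Delta_i=\epsilon_i(a-a_i)$, $x=\frac{\nu_n}2a+\sum_i\xi'_i\Delta_i^{-1/2}$ (coefficients $\xi'_i$ read off from the displayed $x$); $H=\Pi^2+aP_y^2$, $\Pi=\frac a{\dot x}P_a$ (geodesic Hamiltonian of $g=\dot x^2a^{-2}da^2+a^{-1}dy^2$, $y\in\mathbb{R}$); $G=\sum_{k=0}^nA_{n-k}H^{n-k}P_y^{2k+1}$, $Q_1=\sum_{k=0}^n\tilde b_kH^{n-k}\Pi P_y^{2k}$, $Q_2=\sum_{k=0}^n\tilde c_kH^{n-k}P_y^{2k+1}$, $S_1=Q_1+yG$, $S_2=Q_2+yQ_1+\frac{y^2}2G$, with $\tilde b_k=(-1)^k(\nu_n\sigma_k+\sum_i\frac{\xi'_i}{\sqrt{\Delta_i}}\sigma^i_{k-1})$, $\tilde c_k=\frac{(-1)^{k+1}}2\{\nu_n^2a\sigma_k+2\nu_n\sum_i\frac{\xi'_i}{\sqrt{\Delta_i}}(\sigma^i_k+a\sigma^i_{k-1})+\sum_i\frac{\xi_i'^2}{\Delta_i}\sigma^i_{k-1}+\sum_{i\neq j}\frac{\xi'_i\xi'_j}{\sqrt{\Delta_i\Delta_j}}(\sigma^{ij}_{k-1}+a\sigma^{ij}_{k-2})\}$; $\sigma_k$ by $\prod_i(a-a_i)=\sum_k(-1)^k\sigma_ka^{n-k}$, $\sigma^i_m$ by $\prod_{l\ne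 i}(a-a_l)=\sum_{m=0}^{n-1}(-1)^m\sigma^i_ma^{n-1-m}$, $\sigma^i_{-1}=\sigma^i_n=0$, $\sigma^{ij}_m$ by $\prod_{l\ne i,j}(a-a_l)=\sum_{m=0}^{n-2}(-1)^m\sigma^{ij}_ma^{n-2-m}$, $\sigma^{ij}_{-2}=\sigma^{ij}_{-1}=\sigma^{ij}_{n-1}=\sigma^{ij}_n=0$. ''Globally defined on $M\cong\mathbb{H}^2$'': $g$ is a smooth Riemannian metric on the whole domain $M=(0,\sqrt{a_1})_u\times\mathbb{R}_y$, there is a smooth diffeomorphism $t=t(u)$ of $(0,\sqrt{a_1})$ onto $(0,\infty)$ or $(-\infty,0)$ with $g=\Phi(dt^2+dy^2)/t^2$, $\Phi$ smooth positive, and $S_1,S_2$ are smooth on $T^*M$. *)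

(* Defs.v *)
From HB Require Import structures.
From mathcomp Require Import all_boot all_order all_algebra.
From mathcomp Require Import all_classical all_reals all_analysis.
Set Implicit Arguments. Unset Strict Implicit. Unset Printing Implicit Defensive.
Import Order.TTheory GRing.Theory Num.Theory.
Import numFieldNormedType.Exports.
Local Open Scope classical_set_scope.
Local Open Scope ring_scope.

Fixpoint iter_dir {R : realType} {V : normedModType R} (vs : seq V) (f : V -> R)
  : V -> R :=
  match vs with
  | [::] => f
  | v :: vs' => fun x => derive (iter_dir vs' f) x v
  end.

Definition smooth_on {R : realType} {V : normedModType R} (U : set V) (f : V -> R) :=
  forall vs : seq V, forall x, U x ->
    (forall v : V, derivable (iter_dir vs f) x v) /\ {for x, continuous (iter_dir vs f)}.

(* roots a_1,...,a_n are a 1, ..., a n (indices 1..n); [excl] removes indices *)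
Definition roots_excl {R : realType} (n : nat) (a : nat -> R) (excl : seq nat) : seq R :=
  [seq a l | l <- iota 1 n & l \notin excl].

(* sigma_m of a family s: prod_{r in s} (X - r) = sum_m (-1)^m sigma_m X^{|s|-m},
   and sigma_m := 0 for m < 0 or m > |s|. *)
Definition sig {R : realType} (s : seq R) (m : int) : R :=
  match m with
  | Posz k => if (k <= size s)%N
              then (-1) ^+ k * (\prod_(r <- s) ('X - r%:P))`_(size s - k)
              else 0
  | Negz _ => 0
  end.

Definition Fpoly {R : realType} (n : nat) (a : nat -> R) : {poly R} :=
  \prod_(1 <= i < n.+1) ('X - (a i)%:P).
Definition Acoef {R : realType} (n : nat) (a : nat -> R) (k : nat) : R :=
  (Fpoly n a)`_k.

Section Construction.
Variables (R : realType) (n : nat) (a : nat -> R) (eps : nat -> R)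
          (nu : R) (xi' : nat -> R).

Definition Delta (i : nat) (s : R) : R := eps i * (s - a i).

Definition xfun (s : R) : R :=
  nu / 2 * s + \sum_(1 <= i < n.+1) xi' i / Num.sqrt (Delta i s).

Definition xdot (s : R) : R := derive1 xfun s.

Definition sigma (k : int) : R := sig (roots_excl n a [::]) k.
Definition sigma1 (i : nat) (m : int) : R := sig (roots_excl n a [:: i]) m.
Definition sigma2 (i j : nat) (m : int) : R := sig (roots_excl n a [:: i; j]) m.

Definition btil (k : nat) (s : R) : R :=
  (-1) ^+ k * (nu * sigma k
     + \sum_(1 <= i < n.+1) xi' i / Num.sqrt (Delta i s) * sigma1 i (k%:Z - 1)).

Definition ctil (k : nat) (s : R) : R :=
  (-1) ^+ k.+1 / 2 *
   (nu ^+ 2 * s * sigma k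
    + 2 * nu * (\sum_(1 <= i < n.+1)
                  xi' i / Num.sqrt (Delta i s) * (sigma1 i k + s * sigma1 i (k%:Z - 1)))
    + (\sum_(1 <= i < n.+1) xi' i ^+ 2 / Delta i s * sigma1 i (k%:Z - 1))
    + (\sum_(1 <= i < n.+1) \sum_(1 <= j < n.+1 | j != i)
          xi' i * xi' j / Num.sqrt (Delta i s * Delta j s)
          * (sigma2 i j (k%:Z - 1) + s * sigma2 i j (k%:Z - 2)))).

(* Phase space T^*M in canonical coordinates z = ((u, y), (p_u, p_y)) of the
   chart (u, y), u = sqrt a.  Point transformation a = u^2 gives
   P_a = p_u / (2 u). *)
Definition a_of (z : (R * R) * (R * R)) : R := z.1.1 ^+ 2.
Definition y_of (z : (R * R) * (R * R)) : R := z.1.2.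
Definition Pa_of (z : (R * R) * (R * R)) : R := z.2.1 / (2 * z.1.1).
Definition Py_of (z : (R * R) * (R * R)) : R := z.2.2.

Definition PiF (z : (R * R) * (R * R)) : R := a_of z / xdot (a_of z) * Pa_of z.
Definition HF (z : (R * R) * (R * R)) : R := PiF z ^+ 2 + a_of z * Py_of z ^+ 2.

Definition GF (z : (R * R) * (R * R)) : R :=
  \sum_(0 <= k < n.+1) Acoef n a (n - k) * HF z ^+ (n - k) * Py_of z ^+ (2 * k).+1.
Definition Q1F (z : (R * R) * (R * R)) : R :=
  \sum_(0 <= k < n.+1) btil k (a_of z) * HF z ^+ (n - k) * PiF z * Py_of z ^+ (2 * k).
Definition Q2F (z : (R * R) * (R * R)) : R :=
  \sum_(0 <= k < n.+1) ctil k (a_of z) * HF z ^+ (n - k) * Py_of z ^+ (2 * k).+1.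

Definition S1F (z : (R * R) * (R * R)) : R := Q1F z + y_of z * GF z.
Definition S2F (z : (R * R) * (R * R)) : R :=
  Q2F z + y_of z * Q1F z + y_of z ^+ 2 / 2 * GF z.

(* Metric g = xdot^2 a^{-2} da^2 + a^{-1} dy^2 written in the chart (u, y),
   a = u^2, da = 2u du: components g_uu, g_uy, g_yy. *)
Definition g_uu (p : R * R) : R :=
  xdot (p.1 ^+ 2) ^+ 2 / (p.1 ^+ 2) ^+ 2 * (2 * p.1) ^+ 2.
Definition g_uy (p : R * R) : R := 0.
Definition g_yy (p : R * R) : R := (p.1 ^+ 2)^-1.

Definition Mset : set (R * R) := [set p | 0 < p.1 < Num.sqrt (a 1)].
Definition TMset : set ((R * R) * (R * R)) := [set z | Mset z.1].

Definition globally_defined : Prop :=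
  (smooth_on Mset g_uu /\ smooth_on Mset g_uy /\ smooth_on Mset g_yy /\
   (forall p, Mset p -> 0 < g_uu p /\ 0 < g_uu p * g_yy p - g_uy p ^+ 2)) /\
  (* a diffeomorphism t(u) of (0, sqrt a_1) onto (0,oo) or (-oo,0), and a
     smooth positive Phi on M with g = Phi (dt^2 + dy^2) / t^2 *)
  (exists (J : set R) (t tinv : R -> R) (Phi : R * R -> R),
      (J = [set s | 0 < s] \/ J = [set s | s < 0]) /\
      smooth_on [set u | 0 < u < Num.sqrt (a 1)] t /\
      smooth_on J tinv /\
      (forall u, 0 < u < Num.sqrt (a 1) -> J (t u) /\ tinv (t u) = u) /\
      (forall s, J s -> 0 < tinv s < Num.sqrt (a 1) /\ t (tinv s) = s) /\
      smooth_on Mset Phi /\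
      (forall p, Mset p -> 0 < Phi p) /\
      (forall p, Mset p ->
         g_uu p = Phi p * (derive1 t p.1) ^+ 2 / (t p.1) ^+ 2 /\
         g_uy p = Phi p * 0 / (t p.1) ^+ 2 /\
         g_yy p = Phi p * 1 / (t p.1) ^+ 2)) /\
  smooth_on TMset S1F /\ smooth_on TMset S2F.

End Construction.

Definition pow32 {R : realType} (x : R) : R := x * Num.sqrt x.

Definition xi_mp {R : realType} (xi : nat -> R) (i : nat) : R :=
  if i == 1%N then -1 else - xi i.
Definition xi_mm {R : realType} (xi : nat -> R) (i : nat) : R :=
  if i == 1%N then 1 else xi i.

(* Main.v *)
Require Import Defs.
From HB Require Import structures.
From mathcomp Require Import all_boot all_order all_algebra.
From mathcomp Require Import all_classical all_reals all_analysis.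
From mathcomp Require Import ring lra.
Set Implicit Arguments. Unset Strict Implicit. Unset Printing Implicit Defensive.
Import Order.TTheory GRing.Theory Num.Theory.
Import numFieldNormedType.Exports.
Local Open Scope classical_set_scope.
Local Open Scope ring_scope.

Section Basics.
Context {R : realType} {V : normedModType R}.

Lemma near_agree (U : set V) (f g : V -> R) x : open U -> U x ->
  (forall y, U y -> f y = g y) -> \forall y \near x, f y = g y.
Proof.
move=> Uo Ux fg.
have : \forall y \near x, U y by apply: open_nbhs_nbhs; split.
by apply: filterS => y /fg.
Qed.

Lemma cont_near (f g : V -> R) x : (\forall y \near x, f y = g y) ->
  {for x, continuous f} -> {for x, continuous g}.
Proof.
move=> fg cf.
have gx : g x = f x by rewrite (nbhs_singleton fg).
rewrite /prop_for /continuous_at gx.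
apply: cvg_trans cf.
by apply: near_eq_cvg; apply: filterS fg => y ->.
Qed.

Lemma derive_line (f : V -> R) x v :
  (derivable f x v <-> derivable (fun h : R => f (h *: v + x)) 0 1) /\
  'D_v f x = 'D_1 (fun h : R => f (h *: v + x)) 0.
Proof.
rewrite /derivable /derive.
have -> : (fun h : R => h^-1 *: ((f \o shift x) (h *: v) - f x)) =
  (fun h : R => h^-1 *: (((fun h : R => f (h *: v + x)) \o shift 0) (h *: 1) - f (0 *: v + x))).
  by apply/funext => h /=; rewrite scale0r add0r addr0 /GRing.scale /= mulr1.
by [].
Qed.

Lemma derive_comp1 (phi : R -> R) (f : V -> R) x v d :
  derivable f x v -> is_derive (f x) 1 phi d ->
  derivable (phi \o f) x v /\ 'D_v (phi \o f) x = d * 'D_v f x.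
Proof.
move=> df dphi.
have [L1 E1] := derive_line f x v.
have [L2 E2] := derive_line (phi \o f) x v.
have dg := derivableP (proj1 L1 df).
have dphi' : is_derive ((fun h : R => f (h *: v + x)) 0) 1 phi d.
  by rewrite /= scale0r add0r.
have := is_derive1_comp dphi' dg => -[H1 H2].
split; first by apply/L2.
by rewrite E2 E1 -H2.
Qed.

End Basics.

Section Gen.
Context {R : realType} {V : normedModType R} (U : set V) (A : (V -> R) -> Prop).

Inductive Gen : (V -> R) -> Prop :=
| Gatom f : A f -> Gen f
| Gcst c : Gen (fun _ => c)
| Gadd f g : Gen f -> Gen g -> Gen (fun x => f x + g x)
| Gmul f g : Gen f -> Gen g -> Gen (fun x => f x * g x)
| Ginv f : Gen f -> (forall x, U x -> f x != 0) -> Gen (fun x => (f x)^-1)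
| Gsqrt f : Gen f -> (forall x, U x -> 0 < f x) -> Gen (fun x => Num.sqrt (f x))
| Gext f g : Gen f -> (forall x, U x -> f x = g x) -> Gen g.

Hypothesis Uo : open U.
Hypothesis HA : forall f, A f -> forall x, U x ->
  {for x, continuous f} /\ forall v, derivable f x v.
Hypothesis HAd : forall f, A f -> forall v,
  exists2 h, Gen h & forall x, U x -> 'D_v f x = h x.

Lemma Gen_reg f : Gen f -> forall x, U x ->
  {for x, continuous f} /\ forall v, derivable f x v.
Proof.
elim => {f}.
- exact: HA.
- move=> c x Ux; split; [exact: cvg_cst | move=> v; exact: derivable_cst].
- move=> f g _ Hf _ Hg x Ux; have [cf df] := Hf x Ux; have [cg dg] := Hg x Ux.
  split; first exact: cvgD.
  by move=> v; apply: derivableD.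
- move=> f g _ Hf _ Hg x Ux; have [cf df] := Hf x Ux; have [cg dg] := Hg x Ux.
  split; first exact: cvgM.
  by move=> v; apply: derivableM.
- move=> f _ Hf nz x Ux; have [cf df] := Hf x Ux.
  split; first exact: cvgV (nz x Ux) cf.
  by move=> v; apply: derivableV (nz x Ux) (df v).
- move=> f _ Hf pos x Ux; have [cf df] := Hf x Ux.
  split.
    exact: (continuous_comp cf (@sqrt_continuous R (f x))).
  move=> v; have [] := derive_comp1 (df v) (is_derive1_sqrt (pos x Ux)).
  by [].
- move=> f g _ Hf fg x Ux; have [cf df] := Hf x Ux.
  have nfg := near_agree Uo Ux fg.
  split; first exact: cont_near nfg cf.
  move=> v; apply: near_eq_derivable (df v).
  by apply: filterS nfg.
Qed.

Lemma Gen_der f : Gen f -> forall v,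
  exists2 h, Gen h & forall x, U x -> 'D_v f x = h x.
Proof.
move=> Gf; elim: Gf => {f}.
- exact: HAd.
- move=> c v; exists (fun _ => 0); first exact: Gcst.
  by move=> x _; apply: (derive_cst c).
- move=> f g Gf Hf Gg Hg v.
  have [hf Ghf Ef] := Hf v; have [hg Ghg Eg] := Hg v.
  exists (fun x => hf x + hg x); first exact: Gadd.
  move=> x Ux; have [_ df] := Gen_reg Gf Ux; have [_ dg] := Gen_reg Gg Ux.
  by rewrite (deriveD (df v) (dg v)) Ef // Eg.
- move=> f g Gf Hf Gg Hg v.
  have [hf Ghf Ef] := Hf v; have [hg Ghg Eg] := Hg v.
  exists (fun x => f x * hg x + g x * hf x).
    by apply: Gadd; apply: Gmul.
  move=> x Ux; have [_ df] := Gen_reg Gf Ux; have [_ dg] := Gen_reg Gg Ux.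
  by rewrite (deriveM (df v) (dg v)) Ef // Eg.
- move=> f Gf Hf nz v.
  have [hf Ghf Ef] := Hf v.
  exists (fun x => (-1) * ((f x)^-1 * (f x)^-1) * hf x).
    apply: Gmul => //; apply: Gmul; first exact: Gcst.
    by apply: Gmul; apply: Ginv.
  move=> x Ux; have [_ df] := Gen_reg Gf Ux.
  rewrite (deriveV (nz x Ux) (df v)) Ef // /GRing.scale /=.
  by rewrite mulN1r -invfM -expr2.
- move=> f Gf Hf pos v.
  have [hf Ghf Ef] := Hf v.
  exists (fun x => (2 * Num.sqrt (f x))^-1 * hf x).
    apply: Gmul => //; apply: Ginv.
      by apply: Gmul; [exact: Gcst | exact: Gsqrt].
    by move=> x Ux; rewrite mulf_neq0 // gt_eqF // sqrtr_gt0 pos.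
  move=> x Ux; have [_ df] := Gen_reg Gf Ux.
  have [_ ->] := derive_comp1 (df v) (is_derive1_sqrt (pos x Ux)).
  by rewrite Ef.
- move=> f g Gf Hf fg v.
  have [hf Ghf Ef] := Hf v.
  exists hf => // x Ux.
  rewrite -Ef //; apply: near_eq_derive.
  have := near_agree Uo Ux fg.
  by apply: filterS => y ->.
Qed.

Lemma iter_dir_Gen f : Gen f -> forall vs,
  exists2 h, Gen h & forall x, U x -> iter_dir vs f x = h x.
Proof.
move=> Gf; elim => [|v vs [h Gh Eh]]; first by exists f.
have [h' Gh' Eh'] := Gen_der Gh v.
exists h' => // x Ux /=.
rewrite -Eh' //; apply: near_eq_derive.
exact: near_agree Uo Ux Eh.
Qed.

Theorem Gen_smooth f : Gen f -> smooth_on U f.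
Proof.
move=> Gf vs x Ux.
have [h Gh Eh] := iter_dir_Gen Gf vs.
have [ch dh] := Gen_reg Gh Ux.
have nh : \forall y \near x, h y = iter_dir vs f y.
  by apply: near_agree Uo Ux _ => y Uy; rewrite Eh.
split; last exact: cont_near nh ch.
move=> v; apply: near_eq_derivable (dh v).
by apply: filterS nh.
Qed.

Lemma Gopp f : Gen f -> Gen (fun x => - f x).
Proof.
move=> Gf; apply: Gext (Gmul (Gcst (-1)) Gf) _ => x _; exact: mulN1r.
Qed.

Lemma Gsub f g : Gen f -> Gen g -> Gen (fun x => f x - g x).
Proof. by move=> Gf Gg; apply: Gadd => //; apply: Gopp. Qed.

Lemma Gexp f m : Gen f -> Gen (fun x => f x ^+ m).
Proof.
move=> Gf; elim: m => [|m IH].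
  by apply: Gext (Gcst 1) _ => x _; rewrite expr0.
by apply: Gext (Gmul Gf IH) _ => x _; rewrite exprS.
Qed.

Lemma Gdiv f g : Gen f -> Gen g -> (forall x, U x -> g x != 0) ->
  Gen (fun x => f x / g x).
Proof. by move=> Gf Gg nz; apply: Gmul => //; apply: Ginv. Qed.

Lemma Gsum (I : eqType) (r : seq I) (P : pred I) (F : I -> V -> R) :
  (forall i, i \in r -> P i -> Gen (F i)) ->
  Gen (fun x => \sum_(i <- r | P i) F i x).
Proof.
elim: r => [|i r IH] H.
  by apply: Gext (Gcst 0) _ => x _; rewrite big_nil.
have IH' : Gen (fun x => \sum_(i <- r | P i) F i x).
  by apply: IH => j jr; apply: H; rewrite inE jr orbT.
case Pi: (P i).
  apply: Gext (Gadd (H i (mem_head _ _) Pi) IH') _ => x _.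
  by rewrite big_cons Pi.
by apply: Gext IH' _ => x _; rewrite big_cons Pi.
Qed.

End Gen.

Section Lin.
Context {R : realType} {V : normedModType R}.

Definition LinAtom (f : V -> R) :=
  (forall (h : R) v x, f (h *: v + x) = h * f v + f x) /\ continuous f.

Lemma lin_is_derive (f : V -> R) x v : LinAtom f -> is_derive x v f (f v).
Proof.
move=> [lf cf].
have E : \forall h \near 0^', h^-1 *: ((f \o shift x) (h *: v) - f x) = f v.
  apply: filterS (nbhs_dnbhs_neq (0:R)) => h hn0.
  by rewrite /= lf addrK /GRing.scale /= mulrA mulVf // mul1r.
split; first exact: (is_cvg_near_cst (f v) E).
by rewrite /derive; exact: lim_near_cst.
Qed.

Lemma LinAtom_HA (U : set V) f : LinAtom f -> forall x, U x ->
  {for x, continuous f} /\ forall v, derivable f x v.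
Proof.
move=> Lf x _; split; first by case: Lf => _ c; apply: c.
by move=> v; case: (lin_is_derive x v Lf).
Qed.

Lemma LinAtom_HAd (U : set V) (A : (V -> R) -> Prop) f : LinAtom f ->
  forall v, exists2 h, Gen U A h & forall x, U x -> 'D_v f x = h x.
Proof.
move=> Lf v; exists (fun _ => f v); first exact: Gcst.
by move=> x _; case: (lin_is_derive x v Lf).
Qed.

End Lin.

Section Inst.
Context {R : realType}.

Lemma lin11 : LinAtom (fun z : (R*R)*(R*R) => z.1.1).
Proof.
split; first by [].
move=> z; apply: (@continuous_comp _ _ _ fst fst); [exact: cvg_fst | exact: cvg_fst].
Qed.
Lemma lin12 : LinAtom (fun z : (R*R)*(R*R) => z.1.2).
Proof.
split; first by [].
move=> z; apply: (@continuous_comp _ _ _ fst snd); [exact: cvg_fst | exact: cvg_snd].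
Qed.
Lemma lin21 : LinAtom (fun z : (R*R)*(R*R) => z.2.1).
Proof.
split; first by [].
move=> z; apply: (@continuous_comp _ _ _ snd fst); [exact: cvg_snd | exact: cvg_fst].
Qed.
Lemma lin22 : LinAtom (fun z : (R*R)*(R*R) => z.2.2).
Proof.
split; first by [].
move=> z; apply: (@continuous_comp _ _ _ snd snd); [exact: cvg_snd | exact: cvg_snd].
Qed.
Lemma lin1 : LinAtom (fun p : R*R => p.1).
Proof. split; first by []. move=> z; exact: cvg_fst. Qed.
Lemma lin0 : LinAtom (fun u : R => u).
Proof. split; first by move=> h v x; rewrite /GRing.scale. by move=> z. Qed.

End Inst.

Section Isd.
Context {R : realType}.
Implicit Types (f g : R -> R).

Lemma isd_eq f (x df df' : R) : is_derive x 1 f df -> df = df' -> is_derive x 1 f df'.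
Proof. by move=> h <-. Qed.
Lemma isd_cst (c x : R) : is_derive x 1 (fun _ : R => c) 0.
Proof. exact: is_derive_cst. Qed.
Lemma isd_id (x : R) : is_derive x 1 (fun y : R => y) 1.
Proof. exact: is_derive_id. Qed.
Lemma isd_add f g (x df dg : R) : is_derive x 1 f df -> is_derive x 1 g dg ->
  is_derive x 1 (fun y => f y + g y) (df + dg).
Proof. move=> hf hg; exact: is_deriveD. Qed.
Lemma isd_mul f g (x df dg : R) : is_derive x 1 f df -> is_derive x 1 g dg ->
  is_derive x 1 (fun y => f y * g y) (f x * dg + g x * df).
Proof. move=> hf hg; exact: is_deriveM. Qed.
Lemma isd_inv f (x df : R) : f x != 0 -> is_derive x 1 f df ->
  is_derive x 1 (fun y => (f y)^-1) (- (f x)^-2 * df).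
Proof. move=> nz hf; exact: is_deriveV. Qed.
Lemma isd_sqrt f (x df : R) : 0 < f x -> is_derive x 1 f df ->
  is_derive x 1 (fun y => Num.sqrt (f y)) ((2 * Num.sqrt (f x))^-1 * df).
Proof.
move=> pos hf.
have := is_derive1_comp (is_derive1_sqrt pos) hf.
by [].
Qed.
Lemma isd_sum (r : seq nat) (F : nat -> R -> R) (dF : nat -> R) (x : R) :
  (forall i, i \in r -> is_derive x 1 (F i) (dF i)) ->
  is_derive x 1 (fun y => \sum_(i <- r) F i y) (\sum_(i <- r) dF i).
Proof.
elim: r => [|i r IH] H.
  have -> : (fun y => \sum_(i <- [::]) F i y) = (fun _ => 0).
    by apply/funext => y; rewrite big_nil.
  by rewrite big_nil; exact: isd_cst.
have -> : (fun y => \sum_(j <- i :: r) F j y) = (fun y => F i y + \sum_(j <- r) F j y).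
  by apply/funext => y; rewrite big_cons.
rewrite big_cons; apply: isd_add; first exact: H (mem_head _ _).
by apply: IH => j jr; apply: H; rewrite inE jr orbT.
Qed.

Lemma derive1_val f (x df : R) : is_derive x 1 f df -> derive1 f x = df.
Proof. by move=> h; rewrite derive1E; apply: derive_val. Qed.

End Isd.

Section Main.
Context {R : realType} (n : nat) (a xi' : nat -> R).
Hypothesis Ha1 : 0 < a 1%N.
Hypothesis Hai : forall i, (1 <= i <= n)%N -> a 1%N <= a i.

Local Notation EPS := (fun _ : nat => -1 : R).

Definition Dd (i : nat) (u : R) : R := a i - u ^+ 2.
Definition mu (u : R) : R :=
  1 + \sum_(1 <= i < n.+1) xi' i * (Dd i u * Num.sqrt (Dd i u))^-1.
Definition tf (u : R) : R :=
  u + \sum_(1 <= i < n.+1) xi' i * u * (a i * Num.sqrt (Dd i u))^-1.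

Lemma Dpos i u : (1 <= i <= n)%N -> u ^+ 2 < a 1%N -> 0 < Dd i u.
Proof. by move=> Hi Hu; rewrite /Dd subr_gt0 (lt_le_trans Hu) // Hai. Qed.

Lemma aipos i : (1 <= i <= n)%N -> 0 < a i.
Proof. by move=> Hi; apply: lt_le_trans Ha1 (Hai Hi). Qed.

Lemma isd_sq (x : R) : is_derive x 1 (fun y : R => y ^+ 2) (2 * x).
Proof.
have -> : (fun y : R => y ^+ 2) = (fun y => y * y) by apply/funext => y; rewrite expr2.
apply: isd_eq (isd_mul (isd_id x) (isd_id x)) _; ring.
Qed.

Lemma isd_Dd i (x : R) : is_derive x 1 (Dd i) (- (2 * x)).
Proof.
have -> : Dd i = (fun y => a i + (-1) * (y ^+ 2)).
  by apply/funext => y; rewrite /Dd mulN1r.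
apply: isd_eq (isd_add (isd_cst (a i) x) (isd_mul (isd_cst (-1) x) (isd_sq x))) _.
ring.
Qed.

Lemma xdot_eq u : u ^+ 2 < a 1%N -> xdot n a EPS 1 xi' (u ^+ 2) = mu u / 2.
Proof.
move=> Hu; rewrite /xdot.
set s := u ^+ 2.
have -> : xfun n a EPS 1 xi' = (fun y => 1 / 2 * y +
   \sum_(1 <= i < n.+1) xi' i * (Num.sqrt ((-1) * (y + (- a i))))^-1) by [].
apply: derive1_val.
apply: isd_eq.
  apply: isd_add.
  apply: (@isd_sum _ _ _ (fun i => xi' i * (Dd i u * Num.sqrt (Dd i u))^-1 / 2)).
  move=> i; rewrite mem_index_iota => Hi.
  have Hi' : (1 <= i <= n)%N by rewrite -ltnS.
  have Dp := Dpos Hi' Hu.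
  have E : (-1) * (s + - a i) = Dd i u by rewrite /Dd /s; ring.
  apply: isd_eq.
    apply: (isd_mul (isd_cst _ _)).
    apply: isd_inv; first by rewrite E gt_eqF // sqrtr_gt0.
    apply: isd_sqrt; first by rewrite E.
  rewrite /= E /GRing.scale /=.
  have q2 := sqr_sqrtr (ltW Dp).
  have qp : 0 < Num.sqrt (Dd i u) by rewrite sqrtr_gt0.
  move: q2 qp; set q := Num.sqrt (Dd i u) => q2 qp.
  rewrite -q2.
  have qn0 : q != 0 by rewrite gt_eqF.
  by field.
by rewrite /mu -mulr_suml /GRing.scale /= mulr1; field.
Qed.

Lemma tf_deriv u : u ^+ 2 < a 1%N -> is_derive u 1 tf (mu u).
Proof.
move=> Hu.
rewrite /tf /mu.
apply: (isd_add (isd_id _)).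
apply: isd_sum => i; rewrite mem_index_iota => Hi.
have Hi' : (1 <= i <= n)%N by rewrite -ltnS.
have Dp := Dpos Hi' Hu.
have ap := aipos Hi'.
have qp : 0 < Num.sqrt (Dd i u) by rewrite sqrtr_gt0.
apply: isd_eq.
  apply: (isd_mul (isd_mul (isd_cst _ _) (isd_id _))).
  apply: isd_inv.
    by rewrite mulf_neq0 // gt_eqF.
  apply: (isd_mul (isd_cst _ _)).
  exact: (isd_sqrt _ (isd_Dd _ _)).
have q2 := sqr_sqrtr (ltW Dp).
move: q2 qp; set q := Num.sqrt (Dd i u) => q2 qp.
have qn0 : q != 0 by rewrite gt_eqF.
have an0 : a i != 0 by rewrite gt_eqF.
rewrite -q2.
have Ea : a i = q ^+ 2 + u ^+ 2 by rewrite q2 /Dd; ring.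
rewrite Ea.
have Ean0 : q ^+ 2 + u ^+ 2 != 0 by rewrite -Ea.
field; rewrite ?Ean0 ?qn0 ?pnatr_eq0 //=.
Qed.

End Main.

Section GenW.
Context {R : realType} (n : nat) (a xi' : nat -> R).
Hypothesis Ha1 : 0 < a 1%N.
Hypothesis Hai : forall i, (1 <= i <= n)%N -> a 1%N <= a i.
Local Notation EPS := (fun _ : nat => -1 : R).
Context {V : normedModType R} (U : set V) (A : (V -> R) -> Prop) (w : V -> R).
Hypothesis Gw : Gen U A w.
Hypothesis Hw : forall x, U x -> 0 < w x /\ w x ^+ 2 < a 1%N.

Lemma iota_in i : i \in index_iota 1 n.+1 -> (1 <= i <= n)%N.
Proof. by rewrite mem_index_iota ltnS. Qed.

Lemma G_Dd i : Gen U A (fun x => Dd a i (w x)).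
Proof. by apply: Gsub; [exact: Gcst | exact: Gexp]. Qed.

Lemma Dd_pos i x : (1 <= i <= n)%N -> U x -> 0 < Dd a i (w x).
Proof. by move=> Hi Ux; apply: Dpos Hi (Hw Ux).2. Qed.

Lemma G_sqrtDd i : (1 <= i <= n)%N -> Gen U A (fun x => Num.sqrt (Dd a i (w x))).
Proof. by move=> Hi; apply: Gsqrt; [exact: G_Dd | move=> x Ux; exact: Dd_pos]. Qed.

Lemma G_mu : Gen U A (fun x => mu n a xi' (w x)).
Proof.
rewrite /mu; apply: Gadd; first exact: Gcst.
apply: Gsum => i /iota_in Hi _.
apply: Gmul; first exact: Gcst.
apply: Ginv; first by apply: Gmul; [exact: G_Dd | exact: G_sqrtDd].
by move=> x Ux; rewrite mulf_neq0 // gt_eqF // ?sqrtr_gt0 Dd_pos.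
Qed.

Lemma G_tf : Gen U A (fun x => tf n a xi' (w x)).
Proof.
rewrite /tf; apply: Gadd; first exact: Gw.
apply: Gsum => i /iota_in Hi _.
apply: Gmul; first by apply: Gmul; [exact: Gcst | exact: Gw].
apply: Ginv; first by apply: Gmul; [exact: Gcst | exact: G_sqrtDd].
by move=> x Ux; rewrite mulf_neq0 // gt_eqF // ?sqrtr_gt0 ?Dd_pos ?(aipos Ha1 Hai).
Qed.

Lemma Delta_eq i x : Delta a EPS i (w x ^+ 2) = Dd a i (w x).
Proof. by rewrite /Delta /Dd; ring. Qed.

Lemma G_Delta i : Gen U A (fun x => Delta a EPS i (w x ^+ 2)).
Proof. by apply: Gext (G_Dd i) _ => x _; rewrite Delta_eq. Qed.

Lemma Delta_pos i x : (1 <= i <= n)%N -> U x -> 0 < Delta a EPS i (w x ^+ 2).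
Proof. by move=> Hi Ux; rewrite Delta_eq Dd_pos. Qed.

Lemma G_xdot : Gen U A (fun x => xdot n a EPS 1 xi' (w x ^+ 2)).
Proof.
have G1 : Gen U A (fun x => mu n a xi' (w x) * (1 / 2)).
  by apply: Gmul; [exact: G_mu | exact: Gcst].
apply: Gext G1 _ => x Ux.
by rewrite (xdot_eq _ Hai) ?(Hw Ux).2 // mul1r.
Qed.

End GenW.

Lemma open_pre {R : realType} {T : topologicalType} (f : T -> R) (lo hi : R) :
  continuous f -> open [set x | lo < f x < hi].
Proof.
move=> cf.
have -> : [set x | lo < f x < hi] = f @^-1` [set` `]lo, hi[] .
  by apply/seteqP; split => x /=; rewrite in_itv.
by apply: open_comp; [move=> x _; exact: cf | exact: itv_open].
Qed.

Lemma sq_lt_sqrt {R : realType} (u c : R) : 0 < u -> u < Num.sqrt c -> u ^+ 2 < c.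
Proof.
move=> u0 uc.
have c0 : 0 < c.
  rewrite ltNge; apply/negP => hc; move: uc; rewrite ler0_sqrtr // => /(lt_trans u0).
  by rewrite ltxx.
by rewrite -(ltr_sqrt _ c0) sqrtr_sqr gtr0_norm.
Qed.

Section SPart.
Context {R : realType} (n : nat) (a xi' : nat -> R).
Hypothesis Ha1 : 0 < a 1%N.
Hypothesis Hai : forall i, (1 <= i <= n)%N -> a 1%N <= a i.
Hypothesis Hmu : forall u, 0 < u -> u ^+ 2 < a 1%N -> mu n a xi' u != 0.
Local Notation EPS := (fun _ : nat => -1 : R).
Local Notation V4 := ((R * R) * (R * R))%type.
Local Notation U := (TMset a).
Local Notation A := (@LinAtom R V4).

Let w4 := fun z : V4 => z.1.1.
Let Gw4 : Gen U A w4 := Gatom U lin11.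
Let Hw4 : forall z, U z -> 0 < w4 z /\ w4 z ^+ 2 < a 1%N.
Proof. by move=> z /andP[z0 z1]; split => //; apply: sq_lt_sqrt. Qed.

Lemma TM_open : open U.
Proof.
apply: (@open_pre R V4 w4).
move=> z; apply: (@continuous_comp _ _ _ fst fst); [exact: cvg_fst | exact: cvg_fst].
Qed.

Let G_aof : Gen U A (fun z => a_of z).
Proof. exact: Gexp Gw4. Qed.

Let G_xdotA : Gen U A (fun z => xdot n a EPS 1 xi' (a_of z)).
Proof. exact: (G_xdot xi' Hai Gw4 Hw4). Qed.

Let xdotA_nz z : U z -> xdot n a EPS 1 xi' (a_of z) != 0.
Proof.
move=> Uz; have [h1 h2] := Hw4 Uz.
by rewrite /a_of (xdot_eq _ Hai h2) mulf_neq0 //; exact: Hmu.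
Qed.

Let G_Pa : Gen U A (fun z => Pa_of z).
Proof.
rewrite /Pa_of; apply: Gdiv; first exact: (Gatom U lin21).
  by apply: Gmul; [exact: Gcst | exact: Gw4].
by move=> z Uz; rewrite mulf_neq0 // gt_eqF // (Hw4 Uz).1.
Qed.

Let G_Pi : Gen U A (fun z => PiF n a EPS 1 xi' z).
Proof.
rewrite /PiF; apply: Gmul => //.
by apply: Gdiv => //; exact: xdotA_nz.
Qed.

Let G_Py : Gen U A (fun z => Py_of z).
Proof. exact: (Gatom U lin22). Qed.

Let G_y : Gen U A (fun z => y_of z).
Proof. exact: (Gatom U lin12). Qed.

Let G_H : Gen U A (fun z => HF n a EPS 1 xi' z).
Proof.
rewrite /HF; apply: Gadd; first exact: Gexp.
by apply: Gmul => //; exact: Gexp.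
Qed.

Let G_GF : Gen U A (fun z => GF n a EPS 1 xi' z).
Proof.
rewrite /GF; apply: Gsum => k _ _.
apply: Gmul; last exact: Gexp.
by apply: Gmul; [exact: Gcst | exact: Gexp].
Qed.

Let G_DeltaA i : Gen U A (fun z => Delta a EPS i (a_of z)).
Proof. by apply: Gext (G_Delta a Gw4 i) _ => z _. Qed.

Let DeltaA_pos i z : i \in index_iota 1 n.+1 -> U z -> 0 < Delta a EPS i (a_of z).
Proof. by move=> /iota_in Hi Uz; apply: (Delta_pos Hai Hw4). Qed.

Let G_invsqrtDelta i : i \in index_iota 1 n.+1 ->
  Gen U A (fun z => xi' i / Num.sqrt (Delta a EPS i (a_of z))).
Proof.
move=> /iota_in Hi; apply: Gdiv; first exact: Gcst.
  by apply: Gsqrt; [exact: (G_DeltaA i) | move=> z Uz; exact: (Delta_pos Hai Hw4)].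
by move=> z Uz; rewrite gt_eqF // sqrtr_gt0 (Delta_pos Hai Hw4).
Qed.

Let G_btil k : Gen U A (fun z => btil n a EPS 1 xi' k (a_of z)).
Proof.
rewrite /btil; apply: Gmul; first exact: Gcst.
apply: Gadd; first exact: Gcst.
apply: Gsum => i Hi _.
apply: Gmul; [exact: G_invsqrtDelta | exact: Gcst].
Qed.

Let G_ctil k : Gen U A (fun z => ctil n a EPS 1 xi' k (a_of z)).
Proof.
rewrite /ctil; apply: Gmul; first exact: Gcst.
apply: Gadd; last first.
  apply: Gsum => i Hi _; apply: Gsum => j Hj _.
  apply: Gmul.
    apply: Gdiv; first exact: Gcst.
      apply: Gsqrt; first by apply: Gmul; exact: (G_DeltaA _).
      move=> z Uz; apply: mulr_gt0; apply: (Delta_pos Hai Hw4) => //; exact: iota_in.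
    move=> z Uz; rewrite gt_eqF // sqrtr_gt0.
    apply: mulr_gt0; apply: (Delta_pos Hai Hw4) => //; exact: iota_in.
  apply: Gadd; first exact: Gcst.
  by apply: Gmul => //; exact: Gcst.
apply: Gadd; last first.
  apply: Gsum => i Hi _.
  apply: Gmul; last exact: Gcst.
  apply: Gdiv; first exact: Gcst.
    exact: (G_DeltaA _).
  by move=> z Uz; rewrite gt_eqF // (Delta_pos Hai Hw4) // iota_in.
apply: Gadd.
  apply: Gmul; last exact: Gcst.
  by apply: Gmul => //; exact: Gcst.
apply: Gmul; first exact: Gcst.
apply: Gsum => i Hi _.
apply: Gmul; first exact: G_invsqrtDelta.
apply: Gadd; first exact: Gcst.
by apply: Gmul => //; exact: Gcst.
Qed.

Let G_Q1 : Gen U A (fun z => Q1F n a EPS 1 xi' z).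
Proof.
rewrite /Q1F; apply: Gsum => k _ _.
apply: Gmul; last exact: Gexp.
apply: Gmul => //.
by apply: Gmul => //; exact: Gexp.
Qed.

Let G_Q2 : Gen U A (fun z => Q2F n a EPS 1 xi' z).
Proof.
rewrite /Q2F; apply: Gsum => k _ _.
apply: Gmul; last exact: Gexp.
by apply: Gmul => //; exact: Gexp.
Qed.

Lemma G_S1 : Gen U A (fun z => S1F n a EPS 1 xi' z).
Proof. by rewrite /S1F; apply: Gadd => //; apply: Gmul. Qed.

Lemma G_S2 : Gen U A (fun z => S2F n a EPS 1 xi' z).
Proof.
rewrite /S2F; apply: Gadd; first by apply: Gadd => //; apply: Gmul.
apply: Gmul => //; apply: Gmul; [exact: Gexp | exact: Gcst].
Qed.

End SPart.

Lemma lt_sqrt_of_sq {R : realType} (u c : R) : 0 < u -> u ^+ 2 < c -> u < Num.sqrt c.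
Proof.
move=> u0 uc; have c0 : 0 < c by apply: lt_trans uc; rewrite exprn_gt0.
by rewrite -(ltr_sqrt _ c0) in uc; rewrite sqrtr_sqr gtr0_norm in uc.
Qed.

Section T1.
Context {R : realType} (n : nat) (a xi' : nat -> R).
Hypothesis Ha1 : 0 < a 1%N.
Hypothesis Hai : forall i, (1 <= i <= n)%N -> a 1%N <= a i.
Variable b : bool.
Let sg : R := if b then 1 else -1.
Hypothesis Hmu : forall u, 0 < u -> u ^+ 2 < a 1%N -> 0 < sg * mu n a xi' u.
Hypothesis Hunb : forall M, 0 < M -> exists u, [/\ 0 < u, u ^+ 2 < a 1%N & M < sg * tf n a xi' u].

Let t := tf n a xi'.

Lemma tf_cont (u : R) : u ^+ 2 < a 1%N -> {for u, continuous t}.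
Proof.
move=> Hu; apply: differentiable_continuous; apply/derivable1_diffP.
by case: (tf_deriv xi' Ha1 Hai Hu).
Qed.

Lemma tf0 : t 0 = 0.
Proof.
rewrite /t /tf add0r big1_seq // => i _; by rewrite mulr0 mul0r.
Qed.

Lemma sq_lt (u v : R) : 0 <= u -> u < v -> u ^+ 2 < v ^+ 2.
Proof. move=> u0 uv; rewrite !expr2; nra. Qed.

Lemma tf_mono (u v : R) : 0 <= u -> u < v -> v ^+ 2 < a 1%N -> sg * t u < sg * t v.
Proof.
move=> u0 uv va.
have [c cin E] : exists2 c, c \in `]u, v[ & t v - t u = mu n a xi' c * (v - u).
  apply: MVT => //.
    move=> x; rewrite in_itv /= => /andP[ux xv].
    apply: tf_deriv => //; apply: lt_trans va; apply: sq_lt => //.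
    by apply: le_trans (ltW ux).
  apply: continuous_in_subspaceT => x; rewrite inE /= in_itv /= => /andP[ux xv].
  apply: tf_cont; apply: le_lt_trans va.
  have x0 : 0 <= x by apply: le_trans ux.
  rewrite !expr2; nra.
move: cin; rewrite in_itv /= => /andP[uc cv].
have c0 : 0 < c by apply: le_lt_trans uc.
have ca : c ^+ 2 < a 1%N by apply: lt_trans va; apply: sq_lt => //; exact: ltW.
have h := Hmu c0 ca.
rewrite -subr_gt0 -mulrBr E.
by rewrite mulrA mulr_gt0 // subr_gt0.
Qed.

Lemma tf_sgpos (u : R) : 0 < u -> u ^+ 2 < a 1%N -> 0 < sg * t u.
Proof. by move=> u0 ua; have := tf_mono (lexx 0) u0 ua; rewrite tf0 mulr0. Qed.

Lemma tf_inj (u v : R) : 0 < u -> 0 < v -> u ^+ 2 < a 1%N -> v ^+ 2 < a 1%N ->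
  t u = t v -> u = v.
Proof.
move=> u0 v0 ua va E.
case: (ltgtP u v) => // [uv|vu].
  by have := tf_mono (ltW u0) uv va; rewrite E ltxx.
by have := tf_mono (ltW v0) vu ua; rewrite E ltxx.
Qed.

Definition Pinv (s u : R) := (0 < u /\ u ^+ 2 < a 1%N) /\ t u = s.

Definition tinv (s : R) : R :=
  match pselect (exists u, Pinv s u) with
  | left h => proj1_sig (cid h)
  | right _ => 0
  end.

Lemma tinvP (s : R) : (exists u, Pinv s u) -> Pinv s (tinv s).
Proof.
by rewrite /tinv; case: pselect => // h _; exact: (proj2_sig (cid h)).
Qed.

Lemma tinv_ex (s : R) : 0 < sg * s -> exists u, Pinv s u.
Proof.
move=> ss.
have [u0 [u00 u0a Mu]] := Hunb ss.
have [c cin tc] : exists2 c, c \in `[0, u0] & t c = s.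
  apply: IVT; first exact: ltW.
    apply: continuous_in_subspaceT => x; rewrite inE /= in_itv /= => /andP[x0 xu].
    apply: tf_cont; apply: le_lt_trans u0a.
    rewrite !expr2; nra.
  rewrite tf0 ge_min le_max.
  move: ss Mu; rewrite /sg; case: b => /= ss Mu.
    by rewrite !mul1r in ss Mu *; rewrite (ltW ss) (ltW Mu) orbT.
  rewrite !mulN1r !oppr_gt0 ltrN2 in ss Mu.
  by rewrite (ltW ss) (ltW Mu) orbT.
move: cin; rewrite in_itv /= => /andP[c0 cu].
have cn0 : c != 0.
  apply/negP => /eqP c0'; move: tc; rewrite c0' tf0 => s0.
  by move: ss; rewrite -s0 mulr0 ltxx.
have cp : 0 < c by rewrite lt_def cn0 c0.
exists c; split => //; split => //.
apply: le_lt_trans u0a; rewrite !expr2; nra.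
Qed.

Lemma tinv_t (u : R) : 0 < u -> u ^+ 2 < a 1%N -> tinv (t u) = u.
Proof.
move=> u0 ua.
have [[h1 h2] h3] := tinvP (ex_intro _ u (conj (conj u0 ua) erefl)).
exact: tf_inj h3.
Qed.

End T1.

Lemma R1_dir {R : realType} (f : R -> R) (x l v : R) :
  is_derive x 1 f l -> derivable f x v /\ 'D_v f x = v * l.
Proof.
move=> H.
have df : differentiable f x by apply/derivable1_diffP; case: H.
split; first exact: diff_derivable.
rewrite (deriveE v df).
have -> : v = v *: (1 : R) by rewrite /GRing.scale /= mulr1.
rewrite linearZ -(deriveE _ df) derive_val.
by rewrite /GRing.scale /= mulr1.
Qed.

Section T2.
Context {R : realType} (n : nat) (a xi' : nat -> R).
Hypothesis Ha1 : 0 < a 1%N.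
Hypothesis Hai : forall i, (1 <= i <= n)%N -> a 1%N <= a i.
Variable b : bool.
Let sg : R := if b then 1 else -1.
Hypothesis Hmu : forall u, 0 < u -> u ^+ 2 < a 1%N -> 0 < sg * mu n a xi' u.
Hypothesis Hunb : forall M, 0 < M -> exists u, [/\ 0 < u, u ^+ 2 < a 1%N & M < sg * tf n a xi' u].
Local Notation EPS := (fun _ : nat => -1 : R).

Let t := tf n a xi'.
Let ti := tinv n a xi'.
Let J : set R := [set s | 0 < sg * s].

Let mu_nz u : 0 < u -> u ^+ 2 < a 1%N -> mu n a xi' u != 0.
Proof.
move=> u0 ua; have := Hmu u0 ua; apply: contraTneq => ->.
by rewrite mulr0 ltxx.
Qed.

Let J_eq : J = [set s | 0 < s] \/ J = [set s | s < 0].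
Proof.
rewrite /J /sg; case: b; [left|right]; apply/seteqP; split => s /=.
- by rewrite mul1r.
- by rewrite mul1r.
- by rewrite mulN1r oppr_gt0.
- by rewrite mulN1r oppr_gt0.
Qed.

Let J_open : open J.
Proof. by case: J_eq => ->; [exact: open_gt | exact: open_lt]. Qed.

Let ti_range s : J s -> (0 < ti s /\ ti s ^+ 2 < a 1%N) /\ t (ti s) = s.
Proof. by move=> Js; apply: tinvP; exact: (tinv_ex Ha1 Hai Hunb Js). Qed.

Let O : set R := [set u | 0 < u < Num.sqrt (a 1%N)].
Let O_open : open O.
Proof. by apply: (@open_pre R R (fun u => u)) => x. Qed.

Let O_iff u : O u <-> 0 < u /\ u ^+ 2 < a 1%N.
Proof.
rewrite /O /=; split.
  by move=> /andP[u0 u1]; split => //; apply: sq_lt_sqrt.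
by move=> [u0 u1]; rewrite u0 /=; apply: lt_sqrt_of_sq.
Qed.

Let ti_deriv s : J s -> is_derive s 1 ti (mu n a xi' (ti s))^-1.
Proof.
move=> Js; have [[u0 ua] tus] := ti_range Js.
set u := ti s in u0 ua tus *.
have Ou : O u by apply/O_iff.
have nO : \forall y \near u, O y by apply: open_nbhs_nbhs; split.
have H := @is_derive_inverse R t ti (mu n a xi' u) u.
rewrite tus in H; apply: H.
- apply: filterS nO => y /O_iff [y0 ya].
  exact: (tinv_t Ha1 Hai Hmu y0 ya).
- apply: filterS nO => y /O_iff [y0 ya].
  exact: (@tf_cont R n a xi' Ha1 Hai y ya).
- exact: tf_deriv.
- exact: mu_nz.
Qed.

Let Ati := fun f : R -> R => f = ti.

Let Gti : Gen J Ati ti := Gatom J (erefl ti).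

Let ti_w : forall x, J x -> 0 < ti x /\ ti x ^+ 2 < a 1%N.
Proof. by move=> x Jx; case: (ti_range Jx). Qed.

Lemma ti_smooth : smooth_on J ti.
Proof.
apply: (Gen_smooth J_open _ _ Gti).
- move=> f -> x Jx.
  have H := ti_deriv Jx.
  split.
    apply: differentiable_continuous; apply/derivable1_diffP; by case: H.
  by move=> v; case: (R1_dir v H).
- move=> f -> v.
  exists (fun s => v * (mu n a xi' (ti s))^-1).
    apply: Gmul; first exact: Gcst.
    apply: Ginv; first exact: (G_mu xi' Hai Gti ti_w).
    by move=> x Jx; have [h1 h2] := ti_w Jx; exact: mu_nz.
  by move=> x Jx; case: (R1_dir v (ti_deriv Jx)).
Qed.

Lemma t_smooth : smooth_on O t.
Proof.
have Gw : Gen O (@LinAtom R R) (fun u => u) := Gatom O lin0.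
have Hw : forall x, O x -> 0 < x /\ x ^+ 2 < a 1%N by move=> x /O_iff.
have G := G_tf xi' Ha1 Hai Gw Hw.
have S := Gen_smooth O_open _ _ G.
apply: S.
- by move=> f h x Ox; apply: LinAtom_HA.
- by move=> f h; apply: LinAtom_HAd.
Qed.


Let M := Mset a.
Let M_open : open M.
Proof. by apply: (@open_pre R (R * R)%type (fun p => p.1)) => p; exact: cvg_fst. Qed.
Let w2 := fun p : R * R => p.1.
Let Gw2 : Gen M (@LinAtom R (R * R)%type) w2 := Gatom M lin1.
Let Hw2 : forall p, M p -> 0 < w2 p /\ w2 p ^+ 2 < a 1%N.
Proof. by move=> p Mp; apply/O_iff. Qed.

Let sm2 f : Gen M (@LinAtom R (R * R)%type) f -> smooth_on M f.
Proof.
move=> G; apply: (Gen_smooth M_open _ _ G).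
- by move=> g h x Mx; apply: LinAtom_HA.
- by move=> g h; apply: LinAtom_HAd.
Qed.

Let sm4 f : Gen (TMset a) (@LinAtom R ((R * R) * (R * R))%type) f -> smooth_on (TMset a) f.
Proof.
move=> G; apply: (Gen_smooth (@TM_open R a) _ _ G).
- by move=> g h x Mx; apply: LinAtom_HA.
- by move=> g h; apply: LinAtom_HAd.
Qed.

Let t_nz u : 0 < u -> u ^+ 2 < a 1%N -> t u != 0.
Proof.
move=> u0 ua; have := tf_sgpos Ha1 Hai Hmu u0 ua.
by apply: contraTneq; rewrite /t => ->; rewrite mulr0 ltxx.
Qed.

Let Phi := fun p : R * R => t p.1 ^+ 2 / p.1 ^+ 2.

Let guu_eq p : M p -> g_uu n a EPS 1 xi' p = (mu n a xi' p.1 / p.1) ^+ 2.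
Proof.
move=> /Hw2 [u0 ua]; rewrite /g_uu (xdot_eq _ Hai ua).
have un0 : p.1 != 0 by rewrite gt_eqF.
by field.
Qed.

Theorem glob_main : globally_defined n a EPS 1 xi'.
Proof.
split; [split; [|split; [|split]] | split; [|split]].
- apply: sm2; rewrite /g_uu; apply: Gmul; last first.
    by apply: Gexp; apply: Gmul; [exact: Gcst | exact: Gw2].
  apply: Gdiv.
  + by apply: Gexp; exact: (G_xdot xi' Hai Gw2 Hw2).
  + by do 2 apply: Gexp; exact: Gw2.
  + by move=> p /Hw2 [u0 _]; rewrite !expf_neq0 // gt_eqF.
- by apply: sm2; exact: Gcst.
- by apply: sm2; apply: Ginv; [apply: Gexp; exact: Gw2 | move=> p /Hw2 [u0 _]; rewrite expf_neq0 // gt_eqF].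
- move=> p Mp; have [u0 ua] := Hw2 Mp.
  have mn := mu_nz u0 ua.
  have gp : 0 < g_uu n a EPS 1 xi' p.
    by rewrite guu_eq // lt_def sqr_ge0 andbT expf_neq0 // mulf_neq0 // invr_eq0 gt_eqF.
  split => //.
  rewrite /g_uy /g_yy expr0n /= subr0 mulr_gt0 // invr_gt0 exprn_gt0 //.
- exists J, t, ti, Phi.
  split; first exact: J_eq.
  split; first exact: t_smooth.
  split; first exact: ti_smooth.
  split.
    move=> u /andP[u0 u1]; have ua := sq_lt_sqrt u0 u1.
    split; first exact: (tf_sgpos Ha1 Hai Hmu u0 ua).
    exact: (tinv_t Ha1 Hai Hmu u0 ua).
  split.
    move=> s Js; have [[h1 h2] h3] := ti_range Js.
    by rewrite h1 /= lt_sqrt_of_sq.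
  split.
    apply: sm2; rewrite /Phi; apply: Gdiv.
    + by apply: Gexp; exact: (G_tf xi' Ha1 Hai Gw2 Hw2).
    + by apply: Gexp; exact: Gw2.
    + by move=> p /Hw2 [u0 _]; rewrite expf_neq0 // gt_eqF.
  split.
    move=> p /Hw2 [u0 ua]; apply: divr_gt0; last exact: exprn_gt0.
    by rewrite lt_def sqr_ge0 andbT expf_neq0 // t_nz.
  move=> p Mp; have [u0 ua] := Hw2 Mp.
  have tn := t_nz u0 ua.
  have un0 : p.1 != 0 by rewrite gt_eqF.
  rewrite /w2 /= in tn ua.
  rewrite (derive1_val (tf_deriv xi' Ha1 Hai ua)) guu_eq // /Phi /g_uy /g_yy.
  split.
    have E : forall m T u : R, u != 0 -> T != 0 ->
        (m / u) ^+ 2 = T ^+ 2 / u ^+ 2 * m ^+ 2 / T ^+ 2.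
      by move=> m T u h1 h2; field; rewrite h1 h2.
    exact: E.
  split; first by rewrite !mulr0 mul0r.
  have E : forall T u : R, u != 0 -> T != 0 ->
      u ^- 2 = T ^+ 2 / u ^+ 2 * 1 / T ^+ 2.
    by move=> T u h1 h2; field; rewrite h1 h2.
  exact: E.
- exact: sm4 (G_S1 Hai mu_nz).
- exact: sm4 (G_S2 Hai mu_nz).
Qed.

End T2.

Section Fin.
Context {R : realType} (n : nat) (a xi : nat -> R).
Hypothesis Hn : (2 <= n)%N.
Hypothesis Ha : 0 < a 1%N < 1.
Hypothesis Hai2 : forall i, (2 <= i <= n)%N -> 1 < a i.
Hypothesis Hxi : forall i, (2 <= i <= n)%N -> 0 < xi i.

Let a1p : 0 < a 1%N. Proof. by case/andP: Ha. Qed.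
Let a1l : a 1%N < 1. Proof. by case/andP: Ha. Qed.

Let i2_ne1 i : (2 <= i)%N -> (i == 1%N) = false.
Proof. by case: i => [|[|i]]. Qed.

Let Hai : forall i, (1 <= i <= n)%N -> a 1%N <= a i.
Proof.
move=> i /andP[i1 iN]; case E: (i == 1%N); first by rewrite (eqP E).
have h : (2 <= i <= n)%N by rewrite iN andbT ltn_neqAle eq_sym E i1.
exact: le_trans (ltW a1l) (ltW (Hai2 h)).
Qed.

Let in2 i : i \in index_iota 2 n.+1 -> (2 <= i <= n)%N.
Proof. by rewrite mem_index_iota ltnS. Qed.

Let sum_split (F : nat -> R) :
  \sum_(1 <= i < n.+1) F i = F 1%N + \sum_(2 <= i < n.+1) F i.
Proof. by rewrite big_ltn // ltnS (leq_trans _ Hn). Qed.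

Let unb (M : R) : 0 < M -> exists u,
  [/\ 0 < u, u ^+ 2 < a 1%N & M < u * (a 1%N * Num.sqrt (Dd a 1 u))^-1].
Proof.
move=> M0.
have a2p : 0 < a 1%N / 2 by rewrite divr_gt0.
set c0 := Num.sqrt (a 1%N / 2).
have c0p : 0 < c0 by rewrite sqrtr_gt0.
have c02 : c0 ^+ 2 = a 1%N / 2 by rewrite sqr_sqrtr // ltW.
have kp : 0 < 2 * a 1%N * M by rewrite !mulr_gt0.
set q := Num.min c0 (c0 / (2 * a 1%N * M)).
have qp : 0 < q by rewrite lt_min c0p divr_gt0.
have qc0 : q <= c0 by rewrite ge_min lexx.
have qk : q * (2 * a 1%N * M) <= c0 by rewrite -ler_pdivlMr // ge_min lexx orbT.
have q2 : q ^+ 2 <= a 1%N / 2 by rewrite -c02 !expr2; apply: ler_pM => //; exact: ltW.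
have Dp : 0 < a 1%N - q ^+ 2 by lra.
set u := Num.sqrt (a 1%N - q ^+ 2).
have u2 : u ^+ 2 = a 1%N - q ^+ 2 by rewrite sqr_sqrtr // ltW.
have up : 0 < u by rewrite sqrtr_gt0.
have uc0 : c0 <= u by rewrite /c0 /u ler_sqrt; [lra | exact: ltW].
have Dq : Dd a 1 u = q ^+ 2 by rewrite /Dd u2; ring.
exists u; split => //.
  rewrite u2; have : 0 < q ^+ 2 by rewrite exprn_gt0.
  lra.
rewrite Dq sqrtr_sqr gtr0_norm // ltr_pdivlMr ?mulr_gt0 //.
nra.
Qed.


Let Dp u i : u ^+ 2 < a 1%N -> (1 <= i <= n)%N -> 0 < Dd a i u.
Proof. by move=> ua Hi; apply: (Dpos Hai Hi ua). Qed.

Let X_pos u i : u ^+ 2 < a 1%N -> (1 <= i <= n)%N ->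
  0 < (Dd a i u * Num.sqrt (Dd a i u))^-1.
Proof. by move=> ua Hi; rewrite invr_gt0 mulr_gt0 // ?sqrtr_gt0 Dp. Qed.

Let Y_pos u i : u ^+ 2 < a 1%N -> (1 <= i <= n)%N -> 0 < u ->
  0 < u * (a i * Num.sqrt (Dd a i u))^-1.
Proof.
move=> ua Hi u0; rewrite mulr_gt0 // invr_gt0 mulr_gt0 // ?sqrtr_gt0 ?Dp //.
exact: lt_le_trans a1p (Hai Hi).
Qed.

Let in2' i : (2 <= i <= n)%N -> (1 <= i <= n)%N.
Proof. by case/andP => h1 h2; rewrite h2 andbT (leq_trans _ h1). Qed.

Let Hmu_mm u : 0 < u -> u ^+ 2 < a 1%N ->
  0 < (if true then 1 else -1) * mu n a (xi_mm xi) u.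
Proof.
move=> u0 ua; rewrite /= mul1r /mu sum_split /xi_mm eqxx mul1r.
have h1' : (1 <= 1 <= n)%N by rewrite /= (leq_trans _ Hn).
have h1 := @X_pos u 1%N ua h1'.
have h2 : 0 <= \sum_(2 <= i < n.+1) (if i == 1%N then 1 else xi i) *
    (Dd a i u * Num.sqrt (Dd a i u))^-1.
  rewrite big_seq; apply: sumr_ge0 => i /in2 Hi.
  rewrite i2_ne1; last by case/andP: Hi.
  by rewrite mulr_ge0 // ltW // ?Hxi // X_pos // in2'.
lra.
Qed.

Let Hunb_mm M : 0 < M -> exists u,
  [/\ 0 < u, u ^+ 2 < a 1%N & M < (if true then 1 else -1) * tf n a (xi_mm xi) u].
Proof.
move=> M0; have [u [u0 ua Mu]] := unb M0.
exists u; split => //.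
rewrite /= mul1r /tf sum_split /xi_mm eqxx mul1r.
have h2 : 0 <= \sum_(2 <= i < n.+1) (if i == 1%N then 1 else xi i) * u *
    (a i * Num.sqrt (Dd a i u))^-1.
  rewrite big_seq; apply: sumr_ge0 => i /in2 Hi.
  rewrite i2_ne1; last by case/andP: Hi.
  by rewrite -mulrA mulr_ge0 // ltW // ?Hxi // Y_pos // in2'.
lra.
Qed.

Lemma glob_mm : globally_defined n a (fun _ => -1) 1 (xi_mm xi).
Proof. exact: (@glob_main R n a (xi_mm xi) a1p Hai true Hmu_mm Hunb_mm). Qed.

Lemma pow32_le (x y : R) : 0 < x -> x <= y -> (pow32 y)^-1 <= (x * Num.sqrt x)^-1.
Proof.
move=> x0 xy; rewrite /pow32 lef_pV2 ?posrE ?mulr_gt0 ?sqrtr_gt0 //; last exact: lt_le_trans xy.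
apply: ler_pM => //; [exact: ltW | by rewrite ler_sqrt // (le_trans (ltW x0))].
exact: lt_le_trans xy.
Qed.

Hypothesis Hsum : 1 < (pow32 `|a 1%N|)^-1 + \sum_(2 <= i < n.+1) xi i / pow32 `|a i|.

Let Hmu_mp u : 0 < u -> u ^+ 2 < a 1%N ->
  0 < (if false then 1 else -1) * mu n a (xi_mp xi) u.
Proof.
move=> u0 ua; rewrite /= mulN1r oppr_gt0 /mu sum_split /xi_mp eqxx mulN1r.
have h1' : (1 <= 1 <= n)%N by rewrite /= (leq_trans _ Hn).
have h1 : (pow32 `|a 1%N|)^-1 <= (Dd a 1 u * Num.sqrt (Dd a 1 u))^-1.
  apply: pow32_le; first exact: Dp.
  by rewrite gtr0_norm // /Dd lerBlDr lerDl sqr_ge0.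
have E : \sum_(2 <= i < n.+1) (if i == 1%N then -1 else - xi i) *
    (Dd a i u * Num.sqrt (Dd a i u))^-1 =
    - \sum_(2 <= i < n.+1) xi i * (Dd a i u * Num.sqrt (Dd a i u))^-1.
  rewrite -sumrN !big_seq; apply: eq_bigr => i /in2 Hi.
  by rewrite i2_ne1 ?mulNr //; case/andP: Hi.
have h2 : \sum_(2 <= i < n.+1) xi i / pow32 `|a i| <=
    \sum_(2 <= i < n.+1) xi i * (Dd a i u * Num.sqrt (Dd a i u))^-1.
  rewrite !big_seq; apply: ler_sum => i /in2 Hi.
  apply: ler_wpM2l; first exact: ltW (Hxi Hi).
  have ai0 : 0 < a i by apply: lt_trans (Hai2 Hi).
  apply: pow32_le; first by apply: Dp => //; exact: in2'.
  by rewrite gtr0_norm // /Dd lerBlDr lerDl sqr_ge0.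
rewrite E.
have L : forall p1 x1 s sx : R, p1 <= x1 -> s <= sx -> 1 < p1 + s -> 1 + (- x1 - sx) < 0.
  by move=> p1 x1 s sx; lra.
exact: (L _ _ _ _ h1 h2 Hsum).
Qed.

Let Hunb_mp M : 0 < M -> exists u,
  [/\ 0 < u, u ^+ 2 < a 1%N & M < (if false then 1 else -1) * tf n a (xi_mp xi) u].
Proof.
move=> M0; have M1 : 0 < M + 1 by lra.
have [u [u0 ua Mu]] := unb M1.
exists u; split => //.
rewrite /= mulN1r /tf sum_split /xi_mp eqxx mulN1r.
have h2 : \sum_(2 <= i < n.+1) (if i == 1%N then -1 else - xi i) * u *
    (a i * Num.sqrt (Dd a i u))^-1 <= 0.
  rewrite big_seq; apply: sumr_le0 => i /in2 Hi.
  rewrite i2_ne1; last by case/andP: Hi.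
  rewrite -mulrA mulNr oppr_le0 mulr_ge0 // ltW // ?Hxi //.
  by rewrite Y_pos // in2'.
have u1 : u < 1.
  have : u ^+ 2 < 1 by apply: lt_trans a1l.
  rewrite expr2 => h; nra.
have E : - u * (a 1%N * Num.sqrt (Dd a 1 u))^-1 = - (u * (a 1%N * Num.sqrt (Dd a 1 u))^-1).
  by rewrite mulNr.
rewrite E.
have L : forall M y s u : R, M + 1 < y -> s <= 0 -> u < 1 -> M < - (u + (- y + s)).
  by move=> M' y s u'; lra.
exact: (L _ _ _ _ Mu h2 u1).
Qed.

Lemma glob_mp : globally_defined n a (fun _ => -1) 1 (xi_mp xi).
Proof. exact: (@glob_main R n a (xi_mp xi) a1p Hai false Hmu_mp Hunb_mp). Qed.

End Fin.

Theorem proposition29 (R : realType) (n : nat) (a : nat -> R) (xi : nat -> R) :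
  (2 <= n)%N ->
  (forall i j, (1 <= i <= n)%N -> (1 <= j <= n)%N -> i <> j -> a i <> a j) ->
  0 < a 1%N < 1 ->
  (forall i, (2 <= i <= n)%N -> 1 < a i) ->
  (forall i, (2 <= i <= n)%N -> 0 < xi i) ->
  (* I_{-+} *)
  (1 < (pow32 `|a 1%N|)^-1 + \sum_(2 <= i < n.+1) xi i / pow32 `|a i| ->
     globally_defined n a (fun _ => -1) 1 (xi_mp xi))
  /\
  (* I_{--} *)
  globally_defined n a (fun _ => -1) 1 (xi_mm xi).
Proof.
move=> Hn _ Ha Hai2 Hxi; split.
  by move=> Hs; exact: (glob_mp Hn Ha Hai2 Hxi Hs).
exact: (glob_mm Hn Ha Hai2 Hxi).
Qed.
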